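(* For every $n\ge1$, the nilpotency index of any $n$-dimensional complex nilpotent anticommutative algebra is at most $F_n+1$. This bound is sharp; for $n\ge6$ it is attained by the algebras of the family $\mathcal{T}_n$.
   Context: $F_n$ denotes the Fibonacci numbers, $F_1=F_2=1$, $F_{n}=F_{n-1}+F_{n-2}$. For an algebra $N$, $N^1=N$, $N^{k+1}=\sum_{i=1}^kN^iN^{k+1-i}$; $N$ is nilpotent if some $N^k=0$, and its nilpotency index is the least such $k\ge1$. An algebra is anticommutative if $xy=-yx$. With respect to a basis $e_1,\dots,e_n$ and structure constants $e_ie_j=\sum_kc_{ij}^ke_k$, for $n\ge6$, $\mathcal{T}_n$ is the family of anticommutative algebras with $c_{ij}^k=0$ whenever $k\le\max\{i,j\}$, such that: $e_ie_{i+1}=e_{i+2}$ for $1\le i\le n-2$; $c_{1i}^{i+2}=c_{2i}^{i+2}=0$ for $4\le i\le n-2$; $c_{13}^4=c_{14}^5=c_{24}^5=c_{15}^6=c_{25}^6=c_{13}^6=0$; $c_{13}^5\ne0$; $c_{35}^6=1$ and (when $n\ge7$) $c_{46}^7=1$; other structure constants arbitrary subject to these and anticommutativity. *)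

(* Defs.v *)
From HB Require Import structures.
From mathcomp Require Import all_boot all_order all_algebra.
From mathcomp Require Import reals.
From mathcomp Require Import complex.
Set Implicit Arguments. Unset Strict Implicit. Unset Printing Implicit Defensive.
Import Order.TTheory GRing.Theory Num.Theory.
Local Open Scope ring_scope.

Fixpoint fib (n : nat) : nat :=
  match n with
  | 0 => 0
  | 1 => 1
  | (m.+1 as k).+1 => fib k + fib m
  end.

Section Alg.
Variables (F : fieldType) (n : nat).

(* An n-dimensional algebra over F is given by structure constants with respect
   to a basis e_1,...,e_n: c i j k = c_{ij}^k, indices 1-based (1 <= i,j,k <= n);
   values outside this range are irrelevant.  Vectors are row vectors 'rV_n,
   coordinate (k : 'I_n) corresponding to e_{k+1}. *)
Definition amul (c : nat -> nat -> nat -> F) (x y : 'rV[F]_n) : 'rV[F]_n :=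
  \row_(k < n) \sum_(i < n) \sum_(j < n) x 0 i * y 0 j * c i.+1 j.+1 k.+1.

Definition anticomm (c : nat -> nat -> nat -> F) : Prop :=
  forall x y : 'rV[F]_n, amul c x y = - amul c y x.

(* product of two subspaces (represented by matrices whose row spaces they are):
   the span of all products u v, u in A, v in B (spanned by products of rows). *)
Definition subprod (c : nat -> nat -> nat -> F) (A B : 'M[F]_n) : 'M[F]_n :=
  (\sum_(i < n) \sum_(j < n) <<amul c (row i A) (row j B)>>)%MS.

(* powseq c k = [:: N^1; ...; N^k ] with N^1 = N and
   N^{k+1} = sum_{i=1}^k N^i N^{k+1-i}. *)
Fixpoint powseq (c : nat -> nat -> nat -> F) (k : nat) : seq 'M[F]_n :=
  match k with
  | 0 => [::]
  | 1 => [:: 1%:M]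
  | k'.+1 => let s := powseq c k' in
      rcons s (\sum_(i < k') subprod c (nth 0 s i) (nth 0 s (k'.-1 - i)))%MS
  end.

Definition apow (c : nat -> nat -> nat -> F) (k : nat) : 'M[F]_n :=
  nth 0 (powseq c k) k.-1.

Definition pow_zero (c : nat -> nat -> nat -> F) (k : nat) : Prop :=
  (apow c k == (0 : 'M[F]_n))%MS.

Definition nil_index (c : nat -> nat -> nat -> F) (m : nat) : Prop :=
  (1 <= m)%N /\ pow_zero c m /\ (forall k, (1 <= k < m)%N -> ~ pow_zero c k).

Definition nilpotent_alg (c : nat -> nat -> nat -> F) : Prop :=
  exists k, (1 <= k)%N /\ pow_zero c k.

Definition in_T (c : nat -> nat -> nat -> F) : Prop :=
  anticomm c /\
  [/\ (forall i j k, (1 <= i <= n)%N -> (1 <= j <= n)%N -> (1 <= k <= n)%N ->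
         (k <= maxn i j)%N -> c i j k = 0),
      (forall i k, (1 <= i <= n - 2)%N -> (1 <= k <= n)%N ->
         c i i.+1 k = (k == i.+2)%:R),
      (forall i, (4 <= i <= n - 2)%N -> (c 1 i i.+2 = 0 /\ c 2 i i.+2 = 0)),
      [/\ c 1 3 4 = 0, c 1 4 5 = 0, c 2 4 5 = 0, c 1 5 6 = 0
        & (c 2 5 6 = 0 /\ c 1 3 6 = 0)]
    & [/\ c 1 3 5 != 0, c 3 5 6 = 1 & ((7 <= n)%N -> c 4 6 7 = 1)]].

End Alg.

(* Main.v *)
Require Import Defs.
From HB Require Import structures.
From mathcomp Require Import all_boot all_order all_algebra.
From mathcomp Require Import reals.
From mathcomp Require Import complex.
From mathcomp Require Import zify.
Set Implicit Arguments. Unset Strict Implicit. Unset Printing Implicit Defensive.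
Import Order.TTheory GRing.Theory Num.Theory.
Local Open Scope ring_scope.

Lemma fib_SS k : fib k.+2 = (fib k.+1 + fib k)%N.
Proof. by []. Qed.

Lemma fib_mono a b : (a <= b)%N -> (fib a <= fib b)%N.
Proof.
move=> H; rewrite -(subnKC H); elim: (b - a)%N => [|d IH]; first by rewrite addn0.
apply: leq_trans IH _; rewrite addnS.
case E: (a + d)%N => [|m] //; rewrite fib_SS; apply: leq_addr.
Qed.

Lemma fib_pos k : (1 <= k)%N -> (1 <= fib k)%N.
Proof.
elim: k => // [[|k]] IH _ //; rewrite fib_SS; move: (IH isT); lia.
Qed.

Lemma fib_bound2 n Da Db DW a b W : (DW + 2 <= Da)%N -> (DW + 1 <= Db)%N ->
  (Da <= n)%N -> (Db <= n)%N ->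
  (a <= fib (n - Da).+1)%N -> (b <= fib (n - Db).+1)%N -> (W <= a + b)%N ->
  (W <= fib (n - DW).+1)%N.
Proof.
move=> H1 H2 H3 H4 Ha Hb HW.
have -> : (n - DW).+1 = (n - DW - 1).+2 by lia.
rewrite fib_SS.
have Fa := fib_mono (_ : ((n - Da).+1 <= n - DW - 1)%N).
have Fb := fib_mono (_ : ((n - Db).+1 <= (n - DW - 1).+1)%N).
have := Fa ltac:(lia); have := Fb ltac:(lia); lia.
Qed.

Section Main.
Variables (F : numFieldType) (n : nat) (c : nat -> nat -> nat -> F).

Definition Ml (y : 'rV[F]_n) : 'M[F]_n :=
  \matrix_(i < n, k < n) \sum_(j < n) y 0 j * c i.+1 j.+1 k.+1.
Definition Mr (x : 'rV[F]_n) : 'M[F]_n :=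
  \matrix_(j < n, k < n) \sum_(i < n) x 0 i * c i.+1 j.+1 k.+1.

Lemma amulEl x y : amul c x y = x *m Ml y.
Proof.
apply/rowP => k; rewrite !mxE; apply: eq_bigr => i _.
rewrite !mxE big_distrr /=; apply: eq_bigr => j _; by rewrite mulrA.
Qed.

Lemma amulEr x y : amul c x y = y *m Mr x.
Proof.
apply/rowP => k; rewrite !mxE exchange_big; apply: eq_bigr => j _.
rewrite !mxE big_distrr /=; apply: eq_bigr => i _.
by rewrite (mulrC (x 0 i)) mulrA.
Qed.

Lemma subprod_mem (A B : 'M[F]_n) (u v : 'rV[F]_n) : (u <= A)%MS -> (v <= B)%MS ->
  (amul c u v <= subprod c A B)%MS.
Proof.
move=> /submxP[w ->] /submxP[w' ->].
rewrite amulEl -mulmxA; apply: submx_trans (submxMl _ _) _.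
apply/row_subP => i; rewrite row_mul -amulEl amulEr -mulmxA.
apply: submx_trans (submxMl _ _) _.
apply/row_subP => j; rewrite row_mul -amulEr.
rewrite /subprod (sumsmx_sup i) // (sumsmx_sup j) // genmxE.
exact: submx_refl.
Qed.

Lemma subprodP (A B C : 'M[F]_n) :
  reflect (forall u v, (u <= A)%MS -> (v <= B)%MS -> (amul c u v <= C)%MS)
          (subprod c A B <= C)%MS.
Proof.
apply: (iffP idP) => [H u v Hu Hv|H].
  exact: submx_trans (subprod_mem Hu Hv) H.
apply/sumsmx_subP => i _; apply/sumsmx_subP => j _; rewrite genmxE.
by apply: H; apply: row_sub.
Qed.

Lemma subprodS (A A' B B' : 'M[F]_n) : (A <= A')%MS -> (B <= B')%MS ->
  (subprod c A B <= subprod c A' B')%MS.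
Proof.
move=> HA HB; apply/subprodP => u v Hu Hv.
apply: subprod_mem; [exact: submx_trans Hu HA | exact: submx_trans Hv HB].
Qed.

Lemma amulDl (x y z : 'rV[F]_n) : amul c (x + y) z = amul c x z + amul c y z.
Proof. by rewrite !amulEl mulmxDl. Qed.
Lemma amulDr (x y z : 'rV[F]_n) : amul c z (x + y) = amul c z x + amul c z y.
Proof. by rewrite !amulEr mulmxDl. Qed.
Lemma amulZl a (x z : 'rV[F]_n) : amul c (a *: x) z = a *: amul c x z.
Proof. by rewrite !amulEl scalemxAl. Qed.
Lemma amulZr a (x z : 'rV[F]_n) : amul c z (a *: x) = a *: amul c z x.
Proof. by rewrite !amulEr scalemxAl. Qed.


Local Notation N := (apow n c).

Lemma size_powseq k : size (powseq n c k) = k.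
Proof. by elim: k => [|[|k] IH] //=; rewrite size_rcons IH. Qed.

Lemma powseqSS k : powseq n c k.+2 = rcons (powseq n c k.+1)
  (\sum_(i < k.+1) subprod c (nth 0 (powseq n c k.+1) i) (nth 0 (powseq n c k.+1) (k - i)))%MS.
Proof. by []. Qed.

Lemma nth_powseq k i : (i < k)%N -> nth 0 (powseq n c k.+1) i = nth 0 (powseq n c k) i.
Proof.
case: k => [|k] // Hi; rewrite powseqSS nth_rcons size_powseq Hi //.
Qed.

Lemma powseq_nth k i : (i < k)%N -> nth 0 (powseq n c k) i = N i.+1.
Proof.
elim: k => [|k IH] // Hi; rewrite /apow.
move: Hi; rewrite ltnS leq_eqVlt => /orP[/eqP->//|Hik].
by rewrite nth_powseq // IH.
Qed.

Lemma apow1 : N 1 = 1%:M.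
Proof. by []. Qed.

Lemma apowS k : N k.+2 = (\sum_(i < k.+1) subprod c (N i.+1) (N (k - i).+1))%MS.
Proof.
rewrite {1}/apow powseqSS nth_rcons size_powseq ltnn eqxx.
apply: eq_bigr => i _; rewrite !powseq_nth //; lia.
Qed.


Lemma apow_le k : (N k.+2 <= N k.+1)%MS.
Proof.
suff H: forall m j, (j <= m)%N -> (N j.+2 <= N j.+1)%MS by apply: (H k).
clear k.
elim=> [|k IH] j Hj.
  by rewrite leqn0 in Hj; rewrite (eqP Hj) apow1 submx1.
rewrite leq_eqVlt in Hj; case/orP: Hj => [/eqP->|Hj]; last by apply IH.
rewrite (apowS k.+1) (apowS k).
apply/sumsmx_subP => i _.
have Hi := ltn_ord i.
case: (ltnP i k.+1) => Hik.
  apply: (sumsmx_sup (Ordinal Hik)) => //=.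
  apply: subprodS => //.
  have -> : (k.+1 - i = (k - i).+1)%N by lia.
  apply: IH; lia.
have Ei : (i : nat) = k.+1 by lia.
apply: (sumsmx_sup (Ordinal (ltnSn k))) => //=.
rewrite Ei !subnn; apply: subprodS => //; exact: IH.
Qed.

Lemma apow_mono a b : (1 <= a <= b)%N -> (N b <= N a)%MS.
Proof.
case/andP=> Ha Hab; rewrite -(subnKC Hab); elim: (b - a)%N => [|d IH].
  by rewrite addn0.
apply: submx_trans IH; rewrite addnS.
have -> : (a + d = (a + d).-1.+1)%N by lia.
exact: apow_le.
Qed.

Lemma prod_sub a b : (1 <= a)%N -> (1 <= b)%N ->
  (subprod c (N a) (N b) <= N (a + b))%MS.
Proof.
case: a => // a _; case: b => // b _.
rewrite addSn addnS apowS.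
have Ha : (a < (a + b).+1)%N by lia.
apply: (sumsmx_sup (Ordinal Ha)) => //=.
by rewrite (_ : (a + b - a = b)%N) //; lia.
Qed.


Lemma amul_xx (Hac : anticomm n c) (x : 'rV[F]_n) : amul c x x = 0.
Proof.
have := Hac x x; move/eqP; rewrite -addr_eq0 -mulr2n -scaler_nat scaler_eq0.
by rewrite pnatr_eq0 /= => /eqP.
Qed.

Lemma sub_add_split (x : 'rV[F]_n) (B : 'M[F]_n) u : (u <= x + B)%MS ->
  exists a u2, u = a *: x + u2 /\ (u2 <= B)%MS.
Proof.
case/sub_addsmxP => [[u1 u2] /= ->].
have /sub_rVP[a ->] : (u1 *m x <= x)%MS by apply: submxMl.
by exists a, (u2 *m B); split=> //; apply: submxMl.
Qed.

Lemma codim1 (Hac : anticomm n c) (A B : 'M[F]_n) : (B <= A)%MS ->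
  \rank A = (\rank B).+1 ->
  (subprod c A A <= subprod c A B + subprod c B A)%MS.
Proof.
move=> HBA HrA.
have : ~~ (A <= B)%MS.
  by apply/negP => /mxrankS; rewrite HrA ltnn.
case/row_subPn => i Hi; set x := row i A.
have HxA : (x <= A)%MS := row_sub i A.
have HxBA : (x + B <= A)%MS by rewrite addsmx_sub HxA HBA.
have HA : (A <= x + B)%MS.
  have H1 := mxrank_leqif_sup (addsmxSr x B).
  have H2 := mxrank_leqif_eq HxBA.
  have Hr1 : (\rank B < \rank (x + B))%N.
    rewrite ltn_neqAle H1.1 andbT; rewrite H1.2.
    by apply/negP => /(submx_trans (addsmxSl x B)); apply/negP.
  have Hr2 : \rank (x + B)%MS == \rank A.
    by rewrite eqn_leq H2.1 HrA.
  by move: Hr2; rewrite H2.2 => /andP[].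
apply/subprodP => u v Hu Hv.
have [a [u2 [-> Hu2]]] := sub_add_split (submx_trans Hu HA).
have [b [v2 [-> Hv2]]] := sub_add_split (submx_trans Hv HA).
have Hu2A := submx_trans Hu2 HBA.
rewrite !amulDl !amulDr !amulZl !amulZr amul_xx // !scaler0 add0r.
set S := (_ + _)%MS.
have S1 p q : (p <= A)%MS -> (q <= B)%MS -> (amul c p q <= S)%MS.
  by move=> Hp Hq; apply: submx_trans (addsmxSl _ _); apply: subprod_mem.
have S2 p q : (p <= B)%MS -> (q <= A)%MS -> (amul c p q <= S)%MS.
  by move=> Hp Hq; apply: submx_trans (addsmxSr _ _); apply: subprod_mem.
apply: addmx_sub; first by apply: scalemx_sub; apply: S1.
apply: addmx_sub; first by apply: scalemx_sub; apply: S2.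
exact: S1.
Qed.


Local Notation D t := (\rank (N t)).

Lemma D_mono a b : (1 <= a <= b)%N -> (D b <= D a)%N.
Proof. by move=> H; apply: mxrankS; apply: apow_mono. Qed.

Lemma D_lt t : (1 <= t)%N -> ~~ (N t <= N t.+1)%MS -> (D t.+1 < D t)%N.
Proof.
case: t => // t _ HJ.
have H := mxrank_leqif_sup (apow_le t).
by rewrite ltn_neqAle H.1 andbT H.2.
Qed.

Lemma D_le t : (D t <= n)%N.
Proof. exact: rank_leq_col. Qed.

Lemma nonincl_le a b W : (1 <= a)%N -> (1 <= b)%N ->
  ~~ (subprod c (N a) (N b) <= N W.+1)%MS -> (a + b <= W)%N.
Proof.
move=> Ha Hb H; rewrite leqNgt; apply/negP => HW; move/negP: H; apply.
apply: submx_trans (prod_sub Ha Hb) _; apply: apow_mono; lia.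
Qed.


Section Inner.
Variable (Hac : anticomm n c).
Variable (W : nat).
Hypothesis IH : forall t, (1 <= t < W)%N -> ~~ (N t <= N t.+1)%MS ->
  (t <= fib (n - D t).+1)%N.

Lemma bound_lt a b : (1 <= a)%N -> (a < b)%N -> (a + b <= W)%N ->
  ~~ (N a <= N a.+1)%MS -> ~~ (N b <= N b.+1)%MS ->
  (W <= fib (n - D W).+1)%N -> True.
Proof. by []. Qed.

Lemma inner a b : (W = a + b)%N -> (1 <= a)%N -> (1 <= b)%N ->
  ~~ (subprod c (N a) (N b) <= N W.+1)%MS -> (W <= fib (n - D W).+1)%N.
Proof.
move=> Hs Ha Hb Hn.
have Hab := nonincl_le Ha Hb Hn.
case: (boolP (N a <= N a.+1)%MS) => Ja.
  have Hn' : ~~ (subprod c (N a.+1) (N b) <= N W.+1)%MS.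
    apply: contra Hn => H; apply: submx_trans H; exact: subprodS.
  have := nonincl_le (isT : (1 <= a.+1)%N) Hb Hn'.
  move=> H'; lia.
case: (boolP (N b <= N b.+1)%MS) => Jb.
  have Hn' : ~~ (subprod c (N a) (N b.+1) <= N W.+1)%MS.
    apply: contra Hn => H; apply: submx_trans H; exact: subprodS.
  have := nonincl_le Ha (isT : (1 <= b.+1)%N) Hn'.
  move=> H'; lia.
have La := D_lt Ha Ja; have Lb := D_lt Hb Jb.
have Wa := D_le a; have Wb := D_le b.
case: (ltngtP a b) => Hab'.
- have M1 : (D b <= D a.+1)%N by apply: D_mono; lia.
  have M2 : (D W <= D b.+1)%N by apply: D_mono; lia.
  apply: (fib_bound2 (Da := D a) (Db := D b) (a := a) (b := b)) => //; try lia.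
    by apply: IH => //; lia.
  by apply: IH => //; lia.
- have M1 : (D a <= D b.+1)%N by apply: D_mono; lia.
  have M2 : (D W <= D a.+1)%N by apply: D_mono; lia.
  apply: (fib_bound2 (Da := D b) (Db := D a) (a := b) (b := a)) => //; try lia.
    by apply: IH => //; lia.
  by apply: IH => //; lia.
subst b.
have M2 : (D W <= D a.+1)%N by apply: D_mono; lia.
case: (ltnP (D a.+1).+1 (D a)) => Hc.
  apply: (fib_bound2 (Da := D a) (Db := D a) (a := a) (b := a)) => //; try lia.
    by apply: IH => //; lia.
  by apply: IH => //; lia.
have Hcod : (subprod c (N a) (N a) <= subprod c (N a) (N a.+1) + subprod c (N a.+1) (N a))%MS.
  by apply: codim1 => //; [apply: apow_mono; lia | lia].
case: (boolP (subprod c (N a) (N a.+1) <= N W.+1)%MS) => H1.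
  have H2 : ~~ (subprod c (N a.+1) (N a) <= N W.+1)%MS.
    apply: contra Hn => H2; apply: submx_trans Hcod _.
    by rewrite addsmx_sub H1 H2.
  have := nonincl_le (isT : (1 <= a.+1)%N) Ha H2.
  move=> H'; lia.
have := nonincl_le Ha (isT : (1 <= a.+1)%N) H1.
move=> H'; lia.
Qed.

End Inner.


Lemma jump_bound (Hac : anticomm n c) W : (1 <= W)%N -> ~~ (N W <= N W.+1)%MS ->
  (W <= fib (n - D W).+1)%N.
Proof.
suff H : forall m W, (W <= m)%N -> (1 <= W)%N -> ~~ (N W <= N W.+1)%MS ->
  (W <= fib (n - D W).+1)%N by apply: (H W).
clear W.
elim=> [|m IHm] W Hm HW HJ; first by lia.
case: W Hm HW HJ => [|[|k]] Hm HW HJ //.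
  by rewrite apow1 mxrank1 subnn.
have [i Hi] : exists i : 'I_k.+1, ~~ (subprod c (N i.+1) (N (k - i).+1) <= N k.+3)%MS.
  apply/existsP; rewrite -negb_forall; apply: contra HJ => /forallP H.
  by rewrite apowS; apply/sumsmx_subP => i _; apply: H.
apply: (@inner Hac k.+2 _ i.+1 (k - i).+1) => //.
- move=> t Ht HJt; apply: IHm => //; lia.
- have := ltn_ord i; lia.
Qed.


Lemma pow_zeroP k : pow_zero n c k <-> (N k <= (0 : 'M[F]_n))%MS.
Proof.
rewrite /pow_zero; split; first by case/andP.
by move=> H; apply/andP; split=> //; apply: sub0mx.
Qed.

Lemma part1 (Hac : anticomm n c) m : nil_index n c m -> (m <= fib n + 1)%N.
Proof.
case=> Hm [Hz Hmin].
case: m Hm Hz Hmin => [|[|k]] // _ Hz Hmin; first by lia.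
have HJ : ~~ (N k.+1 <= N k.+2)%MS.
  apply/negP => H; apply: (Hmin k.+1); first by lia.
  by apply/pow_zeroP; apply: submx_trans H _; apply/pow_zeroP.
have HD : (1 <= D k.+1)%N.
  rewrite lt0n mxrank_eq0; apply/negP => /eqP E.
  by apply: (Hmin k.+1); [lia | apply/pow_zeroP; rewrite E sub0mx].
have := jump_bound Hac (isT : (1 <= k.+1)%N) HJ.
have := fib_mono (_ : ((n - D k.+1).+1 <= n)%N).
have := D_le k.+1. move=> Hle Hf. have := Hf ltac:(lia). lia.
Qed.


Definition V (t : nat) : 'M[F]_n := diag_mx (\row_(i < n) ((t <= i)%N)%:R).

Lemma memV (u : 'rV[F]_n) t : (u <= V t)%MS <-> forall i : 'I_n, (i < t)%N -> u 0 i = 0.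
Proof.
split.
  move=> /submxP[w Ew] i Hi.
  have E2 : u *m V t = u.
    rewrite Ew -mulmxA; congr (_ *m _); apply/matrixP => p q.
    rewrite /V !mul_mx_diag !mxE; have [->|Hpq] := eqVneq p q.
      by rewrite ?eqxx mulr1n; case: (t <= q)%N; rewrite ?mulr1 ?mulr0.
    by rewrite mulr0n mul0r.
  by rewrite -E2 /V mul_mx_diag !mxE leqNgt Hi mulr0.
move=> H.
have -> : u = u *m V t.
  apply/rowP => i; rewrite /V mul_mx_diag !mxE.
  case: (leqP t i) => Hi; first by rewrite mulr1.
  by rewrite H // mulr0.
exact: submxMl.
Qed.

Section Tri.
Hypothesis Hac : anticomm n c.
Hypothesis Htri : forall i j k, (1 <= i <= n)%N -> (1 <= j <= n)%N ->
  (1 <= k <= n)%N -> (k <= maxn i j)%N -> c i j k = 0.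
Hypothesis Hch : forall i k, (1 <= i <= n - 2)%N -> (1 <= k <= n)%N ->
  c i i.+1 k = (k == i.+2)%:R.

Lemma amulV (u v : 'rV[F]_n) t : (v <= V t)%MS -> (amul c u v <= V t.+1)%MS.
Proof.
move/memV => Hv; apply/memV => k Hk; rewrite mxE.
apply: big1 => i _; apply: big1 => j _.
case: (ltnP j t) => Hj; first by rewrite Hv // mulr0 mul0r.
rewrite Htri ?mulr0 //; have := ltn_ord i; have := ltn_ord j; have := ltn_ord k; lia.
Qed.

Lemma amulV' (u v : 'rV[F]_n) t : (u <= V t)%MS -> (amul c u v <= V t.+1)%MS.
Proof.
move=> Hu; rewrite Hac; have /memV H := amulV v Hu.
by apply/memV => i Hi; rewrite mxE H // oppr0.
Qed.

Lemma nilp t a : (2 ^ t <= a)%N -> (N a <= V t)%MS.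
Proof.
elim: t a => [|t IHt] a Ha.
  by apply/row_subP => i; apply/memV.
case: a Ha => [|[|k]] Ha; try by have := expn_gt0 2 t; rewrite expnS in Ha; lia.
rewrite apowS; apply/sumsmx_subP => i _; apply/subprodP => u v Hu Hv.
have Hi := ltn_ord i.
case: (leqP (2 ^ t) i.+1) => H.
  by apply: amulV'; apply: submx_trans Hu (IHt _ H).
apply: amulV; apply: submx_trans Hv (IHt _ _).
rewrite expnS in Ha; lia.
Qed.

Lemma nilp0 : (N (2 ^ n) <= (0 : 'M[F]_n))%MS.
Proof.
apply/row_subP => i; have /row_subP/(_ i)/memV H := nilp (leqnn (2 ^ n)).
rewrite submx0; apply/eqP/rowP => j; rewrite H ?mxE //.
Qed.

Lemma amul_delta (p q : 'I_n) :
  amul c (delta_mx 0 p) (delta_mx 0 q) = \row_(k < n) c p.+1 q.+1 k.+1.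
Proof.
apply/rowP => k; rewrite !mxE (bigD1 p) //=.
rewrite [X in _ + X]big1 ?addr0; last first.
  by move=> i Hi; apply: big1 => j _; rewrite mxE (negPf Hi) andbF !mul0r.
rewrite (bigD1 q) //= [X in _ + X]big1 ?addr0; last first.
  by move=> j Hj; rewrite [_ 0 j]mxE (negPf Hj) andbF mulr0 mul0r.
by rewrite !mxE !eqxx /= !mul1r.
Qed.

Lemma e_in (p : 'I_n) : ((delta_mx 0 p : 'rV[F]_n) <= N (fib p.+1))%MS.
Proof.
suff H : forall m (p : 'I_n), (p <= m)%N -> ((delta_mx 0 p : 'rV[F]_n) <= N (fib p.+1))%MS.
  by apply: (H p).
clear p; elim=> [|m IHm] p Hp.
  by rewrite leqn0 in Hp; rewrite (eqP Hp) apow1 submx1.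
case: p Hp => [[|[|q]] Hq] Hp /=; try by rewrite apow1 submx1.
move: Hp; rewrite /= => Hp.
have Hq0 : (q < n)%N by lia.
have Hq1 : (q.+1 < n)%N by lia.
have -> : (delta_mx 0 (Ordinal Hq) : 'rV[F]_n) = amul c (delta_mx 0 (Ordinal Hq0)) (delta_mx 0 (Ordinal Hq1)).
  rewrite amul_delta; apply/rowP => k; rewrite !mxE /= Hch; [|lia|have := ltn_ord k; lia].
  by rewrite eqSS.
apply: submx_trans (subprod_mem (IHm (Ordinal Hq0) _) (IHm (Ordinal Hq1) _)) _; try (rewrite /=; lia).
change (subprod c (N (fib q.+1)) (N (fib q.+2)) <= N (fib q.+3))%MS.
rewrite [fib q.+3]fib_SS addnC; apply: prod_sub; apply: fib_pos; lia.
Qed.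

Lemma tri_nil : (1 <= n)%N -> nil_index n c (fib n + 1).
Proof.
move=> Hn.
have Hlow : forall k, (1 <= k <= fib n)%N -> ~ pow_zero n c k.
  move=> k Hk /pow_zeroP Hz.
  have Hp : (n.-1 < n)%N by lia.
  have He := e_in (Ordinal Hp).
have E : (Ordinal Hp : nat).+1 = n by rewrite /= prednK.
rewrite E in He.
  have : ((delta_mx 0 (Ordinal Hp) : 'rV[F]_n) <= (0 : 'M[F]_n))%MS.
    by apply: submx_trans He (submx_trans (apow_mono _) Hz).
  rewrite submx0 => /eqP/matrixP/(_ 0 (Ordinal Hp)); rewrite !mxE !eqxx /=.
  by move/eqP; rewrite oner_eq0.
have Hup : forall W, (fib n + 1 <= W)%N -> (N W <= N W.+1)%MS.
  move=> W HW; apply/negPn/negP => HJ.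
  have HD : (1 <= D W)%N.
    rewrite lt0n mxrank_eq0; apply/negP => /eqP E.
    by move/negP: HJ; apply; rewrite E sub0mx.
  have H1 := jump_bound Hac (_ : (1 <= W)%N) HJ.
  have H2 := fib_mono (_ : ((n - D W).+1 <= n)%N).
  have := D_le W; have := H1 ltac:(lia); have := H2 ltac:(lia); lia.
have Hd : forall d, (N (fib n + 1) <= N (fib n + 1 + d))%MS.
  elim=> [|d IHd]; first by rewrite addn0.
  apply: submx_trans IHd _; rewrite (addnS (fib n + 1) d); apply: Hup; lia.
split; first by lia.
split.
  apply/pow_zeroP; apply: (submx_trans (Hd (2 ^ n)%N)).
  apply: submx_trans (apow_mono _) (nilp0); have := expn_gt0 2 n; lia.
move=> k Hk; apply: Hlow; lia.
Qed.

End Tri.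

End Main.

Lemma anti_skew (F : numFieldType) n (c : nat -> nat -> nat -> F) :
  (forall i j k, c j i k = - c i j k) -> anticomm n c.
Proof.
move=> H x y; apply/rowP => k; rewrite !mxE.
rewrite [X in _ = - X]exchange_big /= -sumrN; apply: eq_bigr => i _.
rewrite -sumrN; apply: eq_bigr => j _.
by rewrite H mulrN (mulrC (x 0 i)).
Qed.

Theorem mainTheorem4 (R : realType) :
  (forall (n : nat) (c : nat -> nat -> nat -> R[i]), (1 <= n)%N ->
     anticomm n c -> nilpotent_alg n c ->
     forall m, nil_index n c m -> (m <= fib n + 1)%N) /\
  (forall n : nat, (1 <= n)%N ->
     exists c : nat -> nat -> nat -> R[i],
       anticomm n c /\ nil_index n c (fib n + 1)) /\
  (forall (n : nat) (c : nat -> nat -> nat -> R[i]), (6 <= n)%N ->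
     in_T n c -> nil_index n c (fib n + 1)).
Proof.
split; [|split].
- move=> n c Hn Hac _ m Hm; exact: (@part1 R[i] n c Hac m Hm).
- move=> n Hn.
  pose c := fun i j k : nat =>
    ((j == i.+1) && (k == i.+2))%:R - ((i == j.+1) && (k == j.+2))%:R : R[i].
  have Hac : anticomm n c.
    by apply: anti_skew => i j k; rewrite /c opprB.
  exists c; split=> //.
  apply: tri_nil => //.
    move=> i j k _ _ _ Hk.
    have E1 : ((j == i.+1) && (k == i.+2)) = false.
      by apply/negP => /andP[/eqP Ej /eqP Ek]; move: Hk; rewrite Ej Ek; lia.
    have E2 : ((i == j.+1) && (k == j.+2)) = false.
      by apply/negP => /andP[/eqP Ej /eqP Ek]; move: Hk; rewrite Ej Ek; lia.
    by rewrite /c E1 E2 subr0.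
  move=> i k _ _; rewrite /c eqxx /=.
  have -> : (i == i.+2) = false by apply/eqP; lia.
  by rewrite /= subr0.
- move=> n c Hn [Hac [Htri Hch _ _ _]].
  apply: tri_nil => //; lia.
Qed.
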